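(* Let $\boldsymbol z\in\{0,1\}^n$ and $\boldsymbol y\in\mathbb R^n$. Let $\mathcal Z_1=\{i:z_i=1\}$, $n_1=|\mathcal Z_1|$, and write $\mathcal Z_1=\{j_1,\dots,j_{n_1}\}$ with $\mathrm{rank}_{j_1}(\boldsymbol y)<\dots<\mathrm{rank}_{j_{n_1}}(\boldsymbol y)$. For an integer $0\le L\le n_1$, $c\in\mathbb R$ and $\kappa>0$, let $\mathcal H_L=\{\boldsymbol\delta\in\mathbb R^n:\sum_{i\in\mathcal Z_1}\mathbf 1(\delta_i>c)\le L\}$, $\mathcal A_L=\{j_{n_1-L+1},\dots,j_{n_1}\}$ if $L\ge1$ and $\mathcal A_0=\emptyset$, $\gamma=\max\{y_i:z_i=1\}-\min\{y_i:z_i=0\}+\kappa$, and $\boldsymbol\eta_L\in\mathbb R^n$ with $\eta_{L,i}=\gamma$ for $i\in\mathcal A_L$ and $\eta_{L,i}=c$ otherwise. Then for every $\boldsymbol\delta\in\mathcal H_L$: (i) for each $1\le k\le n_1$, the $k$-th smallest element of $\{\mathrm{rank}_i(\boldsymbol y-\boldsymbol z\circ\boldsymbol\delta):z_i=1\}$ is at least the $k$-th smallest element of $\{\mathrm{rank}_i(\boldsymbol y-\boldsymbol z\circ\boldsymbol\eta_L):z_i=1\}$; (ii) for each $1\le k\le n-n_1$, the $k$-th smallest element of $\{\mathrm{rank}_i(\boldsymbol y-\boldsymbol z\circ\boldsymbol\delta):z_i=0\}$ is at most the $k$-th smallest element of $\{\mathrm{rank}_i(\boldsymbol y-\boldsymbol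 z\circ\boldsymbol\eta_L):z_i=0\}$.
   Context: For $1\le i,j\le n$ and $y,y'\in\mathbb R$, $\psi_{i,j}(y,y')=\mathbf 1\{y>y'\}+\mathbf 1\{y=y'\}\mathbf 1\{i\ge j\}$; for $\boldsymbol y\in\mathbb R^n$, $\mathrm{rank}_i(\boldsymbol y)=\sum_{j=1}^n\psi_{i,j}(y_i,y_j)$ (a permutation of $\{1,\dots,n\}$). $\circ$ denotes the entrywise product. *)

(* Defs.v *)
From mathcomp Require Import all_boot all_order all_algebra.
Set Implicit Arguments. Unset Strict Implicit. Unset Printing Implicit Defensive.
Import Order.TTheory GRing.Theory Num.Theory.
Local Open Scope ring_scope.

Definition psi (R : realFieldType) (n : nat) (i j : 'I_n) (a b : R) : nat :=
  addn (nat_of_bool (b < a)) (nat_of_bool ((a == b) && (j <= i)%N)).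

Definition rank (R : realFieldType) (n : nat) (w : 'I_n -> R) (i : 'I_n) : nat :=
  (\sum_(j < n) psi i j (w i) (w j))%N.

Definition kth_smallest (s : seq nat) (k : nat) : nat :=
  nth 0%N (sort leq s) k.-1.

Definition shift (R : realFieldType) (n : nat) (y : 'I_n -> R) (z : 'I_n -> bool)
  (d : 'I_n -> R) : 'I_n -> R := fun i => y i - (if z i then d i else 0).

Definition ranks_in (R : realFieldType) (n : nat) (w : 'I_n -> R) (z : 'I_n -> bool)
  (b : bool) : seq nat := [seq rank w i | i <- enum 'I_n & z i == b].

Definition n1 (n : nat) (z : 'I_n -> bool) : nat := #|[set i | z i]|.

Definition treated_sorted (R : realFieldType) (n : nat) (y : 'I_n -> R)
  (z : 'I_n -> bool) : seq 'I_n :=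
  sort (fun a b => leq (rank y a) (rank y b)) [seq i <- enum 'I_n | z i].

Definition A_L (R : realFieldType) (n : nat) (y : 'I_n -> R) (z : 'I_n -> bool)
  (L : nat) : seq 'I_n := drop (n1 z - L) (treated_sorted y z).

(* max{y_i : z_i = 1}, min{y_i : z_i = 0}  (0 by convention if the set is empty) *)
Definition max_treated (R : realFieldType) (n : nat) (y : 'I_n -> R)
  (z : 'I_n -> bool) : R :=
  if [pick i | z i] is Some i0 then \big[Num.max/y i0]_(i | z i) y i else 0.
Definition min_control (R : realFieldType) (n : nat) (y : 'I_n -> R)
  (z : 'I_n -> bool) : R :=
  if [pick i | ~~ z i] is Some i0 then \big[Num.min/y i0]_(i | ~~ z i) y i else 0.

Definition gamma (R : realFieldType) (n : nat) (y : 'I_n -> R) (z : 'I_n -> bool)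
  (kappa : R) : R := max_treated y z - min_control y z + kappa.

Definition eta_L (R : realFieldType) (n : nat) (y : 'I_n -> R) (z : 'I_n -> bool)
  (L : nat) (c kappa : R) : 'I_n -> R :=
  fun i => if i \in A_L y z L then gamma y z kappa else c.

Definition in_H_L (R : realFieldType) (n : nat) (z : 'I_n -> bool) (L : nat)
  (c : R) (d : 'I_n -> R) : Prop :=
  (#|[set i | z i && (c < d i)%R]| <= L)%N.

(* Main.v *)
Require Import Defs.
From mathcomp Require Import all_boot all_order all_algebra.
From mathcomp Require Import lra.
Import Order.TTheory GRing.Theory Num.Theory.
Local Open Scope ring_scope.

Section Aux.
Variables (R : realFieldType) (n : nat).
Implicit Types (w : 'I_n -> R).

Definition lew w (a b : 'I_n) : bool := (w a < w b) || ((w a == w b) && (a <= b)%N).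

Lemma psiE w (i j : 'I_n) : psi i j (w i) (w j) = lew w j i.
Proof.
rewrite /psi /lew; case: (ltgtP (w j) (w i)) => //=.
Qed.

Lemma rankE w i : rank w i = #|[set j | lew w j i]|.
Proof.
rewrite /rank -sum1_card [in RHS]big_mkcond /=; apply: eq_bigr => j _.
by rewrite psiE inE; case: (lew w j i).
Qed.

Lemma lew_refl w a : lew w a a.
Proof. by rewrite /lew eqxx leqnn orbT. Qed.

Lemma lew_trans w a b c : lew w a b -> lew w b c -> lew w a c.
Proof.
rewrite /lew => /orP[h1|/andP[/eqP e1 h1]] /orP[h2|/andP[/eqP e2 h2]].
- by rewrite (lt_trans h1 h2).
- by rewrite -e2 h1.
- by rewrite e1 h2.
- by rewrite e1 e2 eqxx (leq_trans h1 h2) orbT.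
Qed.

Lemma lew_total w a b : lew w a b || lew w b a.
Proof.
rewrite /lew; case: (ltgtP (w a) (w b)) => //= _.
exact: leq_total.
Qed.

Lemma lew_anti w a b : lew w a b -> lew w b a -> a = b.
Proof.
rewrite /lew; case: (ltgtP (w a) (w b)) => //= _ h1 h2.
by apply: val_inj; apply/eqP; rewrite eqn_leq h1 h2.
Qed.

Lemma lewE w a b : lew w a b = (rank w a <= rank w b)%N.
Proof.
rewrite !rankE; apply/idP/idP => h.
  apply: subset_leq_card; apply/subsetP => k; rewrite !inE => hk.
  exact: lew_trans hk h.
apply/negPn/negP => hn.
have hba : lew w b a by move: (lew_total w a b); rewrite (negbTE hn).
have : [set j | lew w j b] \proper [set j | lew w j a].
  apply/properP; split.
    apply/subsetP => k; rewrite !inE => hk; exact: lew_trans hk hba.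
  by exists a; rewrite !inE ?lew_refl.
by move/proper_card; rewrite ltnNge h.
Qed.

Lemma rank_inj w : injective (rank w).
Proof.
move=> a b e; apply: (@lew_anti w); by rewrite lewE e.
Qed.

Lemma rank_perm w : perm_eq (map (rank w) (enum 'I_n)) (iota 1 n).
Proof.
have u1 : uniq (map (rank w) (enum 'I_n)) by rewrite map_inj_uniq ?enum_uniq //; exact: rank_inj.
apply: uniq_perm => //; first exact: iota_uniq.
have [] // := uniq_min_size u1 (s2 := iota 1 n).
- move=> v /mapP[a _ ->]; rewrite mem_iota rankE; apply/andP; split.
    by apply/card_gt0P; exists a; rewrite inE lew_refl.
  by rewrite add1n ltnS; apply: leq_trans (max_card _) _; rewrite card_ord.
- by rewrite size_map size_iota size_enum_ord.
Qed.

Lemma count_rank w x :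
  count (fun i => rank w i <= x)%N (enum 'I_n) = count (fun v => v <= x)%N (iota 1 n).
Proof. by have := permP (rank_perm w) (fun v => v <= x)%N; rewrite count_map. Qed.


Lemma lew_mono w w' a b : lew w a b -> w' a <= w a -> w' b = w b -> lew w' a b.
Proof.
rewrite /lew => /orP[h|/andP[/eqP e h]] le e'; rewrite e'.
  by rewrite (le_lt_trans le h).
rewrite -e; move: le; rewrite le_eqVlt => /orP[/eqP->|->]; by rewrite ?eqxx ?h ?orbT.
Qed.

Lemma lew_shift w (c : R) a b : lew (fun k => w k - c) a b = lew w a b.
Proof. by rewrite /lew ltrD2r (inj_eq (addIr _)). Qed.

Lemma big_max_ge (T : eqType) (s : seq T) (P : pred T) (F : T -> R) x0 i :
  i \in s -> P i -> F i <= \big[Num.max/x0]_(j <- s | P j) F j.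
Proof.
elim: s => //= a s IH; rewrite inE big_cons => /orP[/eqP->|hs] Pi.
  by rewrite Pi le_max lexx.
case: (P a); last exact: IH hs Pi.
by rewrite le_max (IH hs Pi) orbT.
Qed.

Lemma big_min_le (T : eqType) (s : seq T) (P : pred T) (F : T -> R) x0 i :
  i \in s -> P i -> \big[Num.min/x0]_(j <- s | P j) F j <= F i.
Proof.
elim: s => //= a s IH; rewrite inE big_cons => /orP[/eqP->|hs] Pi.
  by rewrite Pi ge_min lexx.
case: (P a); last exact: IH hs Pi.
by rewrite ge_min (IH hs Pi) orbT.
Qed.

Lemma max_treated_ge (y : 'I_n -> R) (z : 'I_n -> bool) i : z i -> y i <= max_treated y z.
Proof.
move=> zi; rewrite /max_treated; case: pickP => [i0 _|h]; last by have := h i; rewrite zi.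
exact: big_max_ge (mem_index_enum _) zi.
Qed.

Lemma min_control_le (y : 'I_n -> R) (z : 'I_n -> bool) i : ~~ z i -> min_control y z <= y i.
Proof.
move=> zi; rewrite /min_control; case: pickP => [i0 _|h]; last by have := h i; rewrite zi.
exact: (@big_min_le _ _ (fun k => ~~ z k) y) (mem_index_enum _) zi.
Qed.

Lemma n1_size (z : 'I_n -> bool) : size [seq i <- enum 'I_n | z i] = n1 z.
Proof. rewrite /n1 cardsE cardE /enum_mem -filter_predI; congr size; apply: eq_filter => i /=. by rewrite andbT. Qed.

Lemma A_facts (y : 'I_n -> R) (z : 'I_n -> bool) L : (L <= n1 z)%N ->
  [/\ {subset A_L y z L <= [pred i | z i]}, #|[set i in A_L y z L]| = L &
      forall t a, z t -> t \notin A_L y z L -> a \in A_L y z L -> (rank y t <= rank y a)%N].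
Proof.
move=> hL.
have memts : forall i, (i \in treated_sorted y z) = z i.
  by move=> i; rewrite /treated_sorted mem_sort mem_filter mem_enum andbT.
have uts : uniq (treated_sorted y z).
  by rewrite /treated_sorted sort_uniq filter_uniq ?enum_uniq.
have sz : size (treated_sorted y z) = n1 z by rewrite /treated_sorted size_sort n1_size.
rewrite /A_L; split.
- by move=> i /mem_drop; rewrite memts.
- by rewrite cardsE (card_uniqP _) ?drop_uniq // size_drop sz subKn.
- move=> t a zt tA aA.
  have tt : t \in take (n1 z - L) (treated_sorted y z).
    by move: (memts t); rewrite zt -{1}(cat_take_drop (n1 z - L) (treated_sorted y z)) mem_cat (negbTE tA) orbF.
  have so : sorted (fun a b : 'I_n => (rank y a <= rank y b)%N) (treated_sorted y z).
    by apply: sort_sorted => a' b'; exact: leq_total.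
  rewrite sorted_pairwise in so; last by move=> b' a' d h1 h2; exact: leq_trans h1 h2.
  move: so; rewrite -(cat_take_drop (n1 z - L) (treated_sorted y z)) pairwise_cat.
  by case/and3P => /allrelP H _ _; exact: H.
Qed.

Lemma ctrl_le (z : 'I_n -> bool) (y : 'I_n -> R) L c kappa delta j :
  (L <= n1 z)%N -> 0 < kappa -> in_H_L z L c delta -> ~~ z j ->
  (rank (shift y z delta) j <= rank (shift y z (eta_L y z L c kappa)) j)%N.
Proof.
move=> hL hk hH zj.
set wd := shift y z delta; set we := shift y z (eta_L y z L c kappa).
set v := shift y z (fun _ => c).
have [Asub Acard Aup] := @A_facts y z L hL.
set A := [set i in A_L y z L] in Acard.
set T := [set i | z i].
set S := [set i | z i && (c < delta i)].
set B := [set i | z i && lew v i j].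
have wdj : wd j = y j by rewrite /wd /shift (negbTE zj) subr0.
have wej : we j = y j by rewrite /we /shift (negbTE zj) subr0.
have vj : v j = y j by rewrite /v /shift (negbTE zj) subr0.
rewrite !rankE -(cardsID T [set k | lew wd k j]) -(cardsID T [set k | lew we k j]).
have -> : [set k | lew wd k j] :\: T = [set k | lew we k j] :\: T.
  apply/setP => k; rewrite !inE; case zk: (z k) => //=.
  by rewrite /lew wdj wej /wd /we /shift zk !subr0.
rewrite leq_add2r.
have h1 : [set k | lew wd k j] :&: T \subset S :|: B.
  apply/subsetP => k; rewrite !inE => /andP[hl zk]; rewrite zk /=.
  case: (ltP c (delta k)) => //= hd.
  apply: lew_mono hl _ _; last by rewrite vj wdj.
  by rewrite /v /wd /shift zk lerD2l lerN2.
have h2 : [set k | lew we k j] :&: T = A :|: B.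
  apply/setP => k; rewrite !inE.
  case kA: (k \in A_L y z L).
    have zk : z k := Asub _ kA.
    rewrite zk /= andbT; apply/orP; left.
    rewrite wej /we /shift zk /eta_L kA /gamma.
    have := @max_treated_ge y z k zk; have := @min_control_le y z j zj. lra.
  case zk: (z k); rewrite ?andbF //=.
  by rewrite /lew wej vj /we /v /shift zk /eta_L kA andbT.
rewrite h2; apply: leq_trans (subset_leq_card h1) _.
have [sub|nsub] := boolP ([set t | z t && (t \notin A_L y z L)] \subset B).
  apply: (@leq_trans #|T|); apply: subset_leq_card; apply/subsetP => k; rewrite !inE.
    by case/orP => /andP[].
  move=> zk; case kA: (k \in A_L y z L) => //=.
  by have := subsetP sub k; rewrite !inE zk kA /= => ->.
have [t] := subsetPn nsub; rewrite !inE => /andP[zt tA] tB.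
have AB : A :&: B = set0.
  apply/setP => a; rewrite !inE; apply/negbTE/negP => /andP[aA /andP[za hav]].
  move: tB; rewrite zt /=; apply/negP/negPn; apply: lew_trans hav.
  have : lew (fun k => y k - c) t a by rewrite lew_shift lewE; exact: Aup.
  by rewrite /lew /v /shift zt za.
rewrite [#|A :|: B|]cardsU AB cards0 subn0 Acard cardsU.
by apply: leq_trans (leq_subr _ _) _; rewrite leq_add2r.
Qed.
End Aux.

Section K.
Local Open Scope nat_scope.
Lemma sorted_cnt_ge (u : seq nat) k : sorted leq u -> (k < size u)%N ->
  (k.+1 <= count (fun v => v <= nth 0 u k)%N u)%N.
Proof.
move=> so hk.
have pw : pairwise leq u by rewrite -sorted_pairwise //; exact: leq_trans.
set x := nth 0 u k.
have e : u = take k u ++ x :: drop k.+1 u by rewrite -drop_nth // cat_take_drop.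
move: pw; rewrite e pairwise_cat => /and3P[ar _ _].
have : all (fun v => v <= x)%N (take k u).
  apply/allP => v hv; move/allrelP: ar => /(_ v x hv); rewrite inE eqxx; exact.
rewrite all_count => /eqP hc.
rewrite count_cat hc size_take hk /= leqnn.
by rewrite /= add1n addnS ltnS leq_addr.
Qed.

Lemma sorted_cnt_le (u : seq nat) k x : sorted leq u -> (k < size u)%N -> (x < nth 0 u k)%N ->
  (count (fun v => v <= x)%N u <= k)%N.
Proof.
move=> so hk hx.
have pw : pairwise leq u by rewrite -sorted_pairwise //; exact: leq_trans.
set y := nth 0 u k in hx *.
have e : u = take k u ++ y :: drop k.+1 u by rewrite -drop_nth // cat_take_drop.
move: pw; rewrite e pairwise_cat => /and3P[_ _ /= /andP[al _]].
rewrite count_cat /= (leqNgt y x) hx /=.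
have -> : count (fun v => v <= x)%N (drop k.+1 u) = 0.
  apply/eqP; rewrite -leqn0 leqNgt -has_count; apply/hasPn => v /(allP al) hv.
  by rewrite -ltnNge (leq_trans hx hv).
by rewrite add0n addn0 (leq_trans (count_size _ _)) // size_take hk.
Qed.

Lemma kth_cmp (s t : seq nat) : size s = size t ->
  (forall x, count (fun v => v <= x)%N t <= count (fun v => v <= x)%N s)%N ->
  forall k, (kth_smallest s k <= kth_smallest t k)%N.
Proof.
move=> hs hc k; rewrite /kth_smallest.
set k' := k.-1.
have sos : sorted leq (sort leq s) by apply: sort_sorted; exact: leq_total.
have sot : sorted leq (sort leq t) by apply: sort_sorted; exact: leq_total.
case: (ltnP k' (size t)) => hk; last by rewrite !nth_default ?size_sort ?hs.
set x := nth 0 (sort leq t) k'.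
rewrite leqNgt; apply/negP => hx.
have h1 := @sorted_cnt_ge _ k' sot; rewrite size_sort in h1; have {h1} h1 := h1 hk.
have h2 := @sorted_cnt_le _ k' x sos; rewrite size_sort hs in h2; have {h2} h2 := h2 hk hx.
have /permPl P1 := perm_sort leq s.
have /permPl P2 := perm_sort leq t.
rewrite (permP P1) in h2; rewrite (permP P2) in h1.
by have := leq_trans h1 (leq_trans (hc x) h2); rewrite ltnn.
Qed.

End K.

From mathcomp Require Import zify.

Theorem lemma6 (R : realFieldType) (n : nat) (z : 'I_n -> bool) (y : 'I_n -> R)
  (L : nat) (c kappa : R) :
  (L <= n1 z)%N -> 0 < kappa ->
  forall delta : 'I_n -> R, in_H_L z L c delta ->
  (forall k : nat, (1 <= k <= n1 z)%N ->
     (kth_smallest (ranks_in (shift y z (eta_L y z L c kappa)) z true) k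
      <= kth_smallest (ranks_in (shift y z delta) z true) k)%N) /\
  (forall k : nat, (1 <= k <= n - n1 z)%N ->
     (kth_smallest (ranks_in (shift y z delta) z false) k
      <= kth_smallest (ranks_in (shift y z (eta_L y z L c kappa)) z false) k)%N).
Proof.
move=> hL hk delta hH.
set we := shift y z (eta_L y z L c kappa); set wd := shift y z delta.
have ctl : forall j, ~~ z j -> (rank wd j <= rank we j)%N.
  by move=> j zj; exact: ctrl_le.
have cnt : forall (w : 'I_n -> R) (b : bool) x, count (fun v => v <= x)%N (ranks_in w z b)
    = count (fun i => (rank w i <= x)%N && (z i == b)) (enum 'I_n).
  by move=> w b x; rewrite /ranks_in count_map count_filter; apply: eq_count => i /=; rewrite andbC.
have szr : forall (w w' : 'I_n -> R) b, size (ranks_in w z b) = size (ranks_in w' z b).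
  by move=> w w' b; rewrite /ranks_in !size_map.
have cC : forall x, (count (fun i => (rank we i <= x)%N && (z i == false)) (enum 'I_n)
    <= count (fun i => (rank wd i <= x)%N && (z i == false)) (enum 'I_n))%N.
  move=> x; apply: sub_count => i /andP[h zi]; rewrite zi andbT.
  by apply: leq_trans (ctl i _) h; rewrite (eqP zi).
have splitg : forall (s : seq 'I_n) (a : pred 'I_n),
    (count (fun i => a i && (z i == true)) s + count (fun i => a i && (z i == false)) s
    = count a s)%N.
  move=> s a; elim: s => //= i s IH; rewrite -IH; case: (a i); case: (z i) => /=; lia.
have tot : forall (w : 'I_n -> R) x, (count (fun i => (rank w i <= x)%N && (z i == true)) (enum 'I_n)
   + count (fun i => (rank w i <= x)%N && (z i == false)) (enum 'I_n))%N
   = count (fun v => v <= x)%N (iota 1 n).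
  move=> w x; rewrite -(@count_rank _ _ w x); exact: (splitg _ (fun i => rank w i <= x)%N).
split.
- move=> k _; apply: kth_cmp; first exact: szr.
  move=> x; rewrite !cnt; have e1 := tot we x; have e2 := tot wd x; have := cC x; lia.
- move=> k _; apply: kth_cmp; first exact: szr.
  by move=> x; rewrite !cnt; exact: cC.
Qed.
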